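(* Fix an integer $q\ge2$, $c\in\mathbb{R}$ and $\lambda\in(-1/q-c,-c)$ such that $f_c$ satisfies the pre-$q$-Sturmian condition for $\lambda$, with Lipschitz function $\psi$ and constant $\beta$; regard $\psi$ as a $1$-periodic function on $\mathbb{R}$. Let $\theta=\lambda+1/q+c\in(0,1/q)$ and $f=f_0$. Then: (i) For any $\lambda+q^{-1}\le x<y\le\lambda+1$: $\psi(y)-\psi(x)\le f\left(q^{-1}-\theta-\frac{y-x}{q-1}\right)-f(q^{-1}-\theta)\le f(0)-f(q^{-1}-\theta)$. (i)' For any $\lambda+q^{-1}-1\le y<x\le\lambda$: $\psi(y)-\psi(x)\le f\left(\theta-\frac{x-y}{q-1}\right)-f(\theta)\le f(0)-f(\theta)$. (ii) For any $x<y$ with $y-x<1$: $\psi(y)-\psi(x)\le f\left(q^{-1}-\theta-\frac{y-x}{q}\right)-f(q^{-1}-\theta)-f'(q^{-1}-\theta)\frac{y-x}{q(q-1)}\le -f'(q^{-1}-\theta)\frac{y-x}{q-1}$. (ii)' For any $y<x$ with $x-y<1$: $\psi(y)-\psi(x)\le f\left(\theta-\frac{x-y}{q}\right)-f(\theta)-f'(\theta)\frac{x-y}{q(q-1)}\le -f'(\theta)\frac{x-y}{q-1}$.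
   Context: $\mathbb{T}=\mathbb{R}/\mathbb{Z}$, $T(x)=qx\bmod1$. $f_0(x)=\log\left|\frac{\sin\pi qx}{\sin\pi x}\right|$ (value $\log q$ at integers), a $1$-periodic even function, real-analytic and strictly concave on $(-1/q,1/q)$ with maximum at $0$; $f_c(x)=f_0(x+c)$. $C_\lambda=[\lambda,\lambda+1/q]\bmod1$. The function $f_c$ satisfies the pre-$q$-Sturmian condition for $\lambda$ if $f_c$ is Lipschitz on $C_\lambda$ and there exist a Lipschitz $\psi:\mathbb{T}\to\mathbb{R}$ and $\beta\in\mathbb{R}$ with $f_c(x)+\psi(x)-\psi(Tx)=\beta$ for all $x\in C_\lambda$. *)

(* Defs.v *)
From Stdlib Require Import Reals ZArith.
From Coquelicot Require Import Coquelicot.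
Open Scope R_scope.

Definition f0 (q : nat) (x : R) : R :=
  if Req_EM_T (sin (PI * x)) 0 then ln (INR q)
  else ln (Rabs (sin (PI * INR q * x) / sin (PI * x))).

Definition fc (q : nat) (c x : R) : R := f0 q (x + c).

(* Points of R whose class mod 1 lies in C_lambda = [lambda, lambda + 1/q] mod 1. *)
Definition inC (q : nat) (lam x : R) : Prop :=
  exists k : Z, lam <= x - IZR k <= lam + / INR q.

(* Lipschitz on a subset S of T = R/Z (elements represented by reals, S given
   by a 1-periodic predicate), for the quotient distance
   d_T(x,y) = min_k |x - y - k|. *)
Definition lipschitz_on_T (S : R -> Prop) (g : R -> R) : Prop :=
  exists L : R, forall x y : R, S x -> S y -> forall k : Z,
    Rabs (g x - g y) <= L * Rabs (x - y - IZR k).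

Definition periodic1 (g : R -> R) : Prop := forall x, g (x + 1) = g x.

(* psi : T -> R, viewed as a 1-periodic function on R; T x = q x mod 1,
   so psi (T x) = psi (q x). *)
Definition pre_q_Sturmian_with (q : nat) (c lam : R) (psi : R -> R) (beta : R)
  : Prop :=
  lipschitz_on_T (inC q lam) (fc q c) /\
  periodic1 psi /\ lipschitz_on_T (fun _ => True) psi /\
  (forall x, inC q lam x -> fc q c x + psi x - psi (INR q * x) = beta).

(* Main.v *)
Require Import Defs.
From Stdlib Require Import Reals ZArith Lra Lia List.
From Coquelicot Require Import Coquelicot.
Import ListNotations.
Open Scope R_scope.

Definition kf (m : R) (j : nat) : R := m - 1 - 2 * INR j.
Definition Ds (m : R) (n : nat) (t : R) : R := sum_f_R0 (fun j => cos (kf m j * t)) n.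
Definition D1s (m : R) (n : nat) (t : R) : R := sum_f_R0 (fun j => - kf m j * sin (kf m j * t)) n.
Definition D2s (m : R) (n : nat) (t : R) : R := sum_f_R0 (fun j => - (kf m j * kf m j) * cos (kf m j * t)) n.

Lemma Ds_tel m n t : 2 * sin t * Ds m n t = sin (m * t) - sin ((m - 2 * INR n - 2) * t).
Proof.
  induction n.
  - unfold Ds, kf; simpl.
    replace (m*t) with ((m-1-2*0)*t + t) by ring.
    replace ((m - 2*0 - 2)*t) with ((m-1-2*0)*t - t) by ring.
    rewrite sin_plus, sin_minus. ring.
  - unfold Ds in *; simpl sum_f_R0. rewrite Rmult_plus_distr_l, IHn. rewrite S_INR. unfold kf.
    rewrite S_INR.
    replace ((m - 2 * (INR n + 1) - 2) * t) with ((m - 1 - 2*(INR n + 1))*t - t) by ring.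
    replace ((m - 2 * INR n - 2) * t) with ((m - 1 - 2*(INR n + 1))*t + t) by ring.
    rewrite sin_plus, sin_minus. ring.
Qed.

Lemma Ds_deriv m n t : is_derive (Ds m n) t (D1s m n t).
Proof.
  induction n.
  - unfold Ds, D1s; simpl. auto_derive; auto. ring.
  - unfold Ds, D1s in *; simpl sum_f_R0.
    apply (is_derive_plus (fun t => sum_f_R0 (fun j : nat => cos (kf m j * t)) n)
             (fun t => cos (kf m (S n) * t))); auto.
    auto_derive; auto. ring.
Qed.

Lemma D1s_deriv m n t : is_derive (D1s m n) t (D2s m n t).
Proof.
  induction n.
  - unfold D1s, D2s; simpl. auto_derive; auto. ring.
  - unfold D1s, D2s in *; simpl sum_f_R0.
    apply (is_derive_plus (fun t => sum_f_R0 (fun j : nat => - kf m j * sin (kf m j * t)) n)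
             (fun t => - kf m (S n) * sin (kf m (S n) * t))); auto.
    auto_derive; auto. ring.
Qed.

Lemma mvt_in (h dh : R -> R) A B s t :
  (forall x, A < x < B -> is_derive h x (dh x)) -> A < s -> s <= t -> t < B ->
  exists c, s <= c <= t /\ h t - h s = dh c * (t - s).
Proof.
  intros Hd Hs Hst Ht.
  destruct (MVT_gen h s t dh) as [c [Hc Heq]].
  - intros x Hx. rewrite Rmin_left in Hx by lra. rewrite Rmax_right in Hx by lra.
    apply Hd; lra.
  - intros x Hx. rewrite Rmin_left in Hx by lra. rewrite Rmax_right in Hx by lra.
    apply continuity_pt_filterlim. apply (ex_derive_continuous (K := R_AbsRing) (V := R_NormedModule) h). exists (dh x). apply Hd; lra.
  - rewrite Rmin_left in Hc by lra. rewrite Rmax_right in Hc by lra.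
    exists c; split; auto.
Qed.

Lemma nonincr_of_deriv (h dh : R -> R) A B s t :
  (forall x, A < x < B -> is_derive h x (dh x)) ->
  (forall x, A < x < B -> dh x <= 0) -> A < s -> s <= t -> t < B -> h t <= h s.
Proof.
  intros Hd Hn Hs Hst Ht.
  destruct (mvt_in h dh A B s t Hd Hs Hst Ht) as [c [Hc Heq]].
  assert (dh c <= 0) by (apply Hn; lra).
  assert (dh c * (t - s) <= 0).
  { apply Rmult_le_0_r; lra. }
  lra.
Qed.

Section Dq.
Variable q : nat.
Hypothesis hq : (2 <= q)%nat.
Let Q := INR q.
Definition DD t := Ds (INR q) (pred q) t.
Definition D1 t := D1s (INR q) (pred q) t.
Definition D2 t := D2s (INR q) (pred q) t.

Lemma Qge2 : 2 <= Q.
Proof. unfold Q. apply (le_INR 2 q) in hq. simpl in hq. lra. Qed.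

Lemma DD_sin t : sin t * DD t = sin (Q * t).
Proof.
  unfold DD. pose proof (Ds_tel (INR q) (pred q) t) as H.
  assert (E : INR (pred q) = INR q - 1).
  { destruct q as [|n]; [lia|]. simpl pred. rewrite S_INR. ring. }
  rewrite E in H.
  replace ((INR q - 2 * (INR q - 1) - 2) * t) with (- (INR q * t)) in H by ring.
  rewrite sin_neg in H. unfold Q. lra.
Qed.

Lemma DD_deriv t : is_derive DD t (D1 t).
Proof. apply Ds_deriv. Qed.
Lemma D1_deriv t : is_derive D1 t (D2 t).
Proof. apply D1s_deriv. Qed.

Lemma E1 t : D1 t * sin t + DD t * cos t = Q * cos (Q * t).
Proof.
  assert (H1 : is_derive (fun t => sin t * DD t) t (cos t * DD t + sin t * D1 t)).
  { apply (is_derive_mult (fun t => sin t) DD). auto_derive; auto; ring. apply DD_deriv.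
    intros; apply Rmult_comm. }
  assert (H2 : is_derive (fun t => sin t * DD t) t (Q * cos (Q * t))).
  { apply is_derive_ext with (fun t => sin (Q * t)). intros; rewrite DD_sin; auto.
    auto_derive; auto. ring. }
  apply is_derive_unique in H1. apply is_derive_unique in H2. rewrite H1 in H2. lra.
Qed.

Lemma E2 t : D2 t * sin t + 2 * D1 t * cos t - DD t * sin t = - (Q * Q) * sin (Q * t).
Proof.
  assert (H1 : is_derive (fun t => D1 t * sin t + DD t * cos t) t
                 ((D2 t * sin t + D1 t * cos t) + (D1 t * cos t - DD t * sin t))).
  { apply (is_derive_plus (fun t => D1 t * sin t) (fun t => DD t * cos t)).
    - evar (l : R). replace (D2 t * sin t + D1 t * cos t) with l.
      apply (is_derive_mult D1 (fun t => sin t)). apply D1_deriv. auto_derive; auto.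
      intros; apply Rmult_comm. unfold l. simpl. unfold plus, mult; simpl. ring.
    - evar (l : R). replace (D1 t * cos t - DD t * sin t) with l.
      apply (is_derive_mult DD (fun t => cos t)). apply DD_deriv. auto_derive; auto.
      intros; apply Rmult_comm. unfold l. simpl. unfold plus, mult; simpl. ring. }
  assert (H2 : is_derive (fun t => D1 t * sin t + DD t * cos t) t (- (Q * Q) * sin (Q * t))).
  { apply is_derive_ext with (fun t => Q * cos (Q * t)). intros; rewrite E1; auto.
    auto_derive; auto. ring. }
  apply is_derive_unique in H1. apply is_derive_unique in H2. rewrite H1 in H2. lra.
Qed.

Lemma KEYid t : (DD t * D2 t - D1 t * D1 t) * (sin t * sin t) = DD t * DD t - Q * Q.
Proof.
  pose proof (E1 t) as e1. pose proof (E2 t) as e2. pose proof (DD_sin t) as e0.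
  pose proof (sin2_cos2 t) as tr1. pose proof (sin2_cos2 (Q * t)) as tr2.
  unfold Rsqr in *.
  set (D := DD t) in *. set (d1 := D1 t) in *. set (d2 := D2 t) in *.
  set (s := sin t) in *. set (c := cos t) in *. set (S := sin (Q*t)) in *. set (C := cos (Q*t)) in *.
  assert (h1 : d1 * s = Q * C - D * c) by lra.
  assert (h2 : d2 * s = - (Q*Q) * S - 2 * d1 * c + D * s) by lra.
  transitivity (D * s * (d2 * s) - (d1 * s) * (d1 * s)). ring.
  rewrite h2, h1.
  transitivity (- (Q*Q) * D * s * S - 2 * D * c * (d1 * s) + D*D*s*s - (Q*C - D*c)*(Q*C - D*c)). ring.
  rewrite h1. rewrite <- e0.
  transitivity (- (Q*Q) * (s*D*(s*D) + C*C) + D*D*(s*s + c*c)). ring.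
  rewrite tr1. rewrite e0. rewrite tr2. ring.
Qed.

Lemma sum_abs_le (f : nat -> R) n : (forall j, Rabs (f j) <= 1) -> Rabs (sum_f_R0 f n) <= INR (S n).
Proof.
  intros H. induction n.
  - simpl. apply H.
  - simpl sum_f_R0. rewrite (S_INR (S n)).
    pose proof (Rabs_triang (sum_f_R0 f n) (f (S n))). pose proof (H (S n)). lra.
Qed.

Lemma sum_nonpos (f : nat -> R) n : (forall j, f j <= 0) -> sum_f_R0 f n <= 0.
Proof.
  intros H. induction n; simpl. apply H. pose proof (H (S n)). lra.
Qed.

Lemma sum_const1 n : sum_f_R0 (fun _ => 1) n = INR (S n).
Proof. induction n. simpl; auto. simpl sum_f_R0. rewrite IHn. rewrite (S_INR (S n)). auto. Qed.

Lemma sum_zero n : sum_f_R0 (fun _ => 0) n = 0.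
Proof. induction n. simpl; auto. simpl sum_f_R0. rewrite IHn. ring. Qed.

Lemma DD_abs t : - Q <= DD t <= Q.
Proof.
  assert (H : Rabs (DD t) <= Q).
  { unfold DD, Ds. eapply Rle_trans. apply sum_abs_le. intros; apply Rabs_le; apply COS_bound.
    unfold Q. destruct q as [|n]; [lia|]. simpl pred. right; auto. }
  pose proof (Rle_abs (DD t)). pose proof (Rle_abs (- DD t)). rewrite Rabs_Ropp in *. lra.
Qed.

Lemma DD0 : DD 0 = Q.
Proof.
  unfold DD, Ds. rewrite (sum_eq _ (fun _ => 1)). rewrite sum_const1.
  unfold Q. destruct q as [|n]; [lia|]. simpl pred. auto.
  intros. rewrite Rmult_0_r. apply cos_0.
Qed.

Lemma D1_0 : D1 0 = 0.
Proof.
  unfold D1, D1s. rewrite (sum_eq _ (fun _ => 0)). apply sum_zero.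
  intros. rewrite Rmult_0_r, sin_0. ring.
Qed.

Lemma D2_0 : D2 0 <= 0.
Proof.
  unfold D2, D2s. apply sum_nonpos. intros. rewrite Rmult_0_r, cos_0.
  pose proof (Rle_0_sqr (kf (INR q) j)). unfold Rsqr in *. lra.
Qed.

Lemma DD_even t : DD (- t) = DD t.
Proof.
  unfold DD, Ds. apply sum_eq. intros. replace (kf (INR q) i * - t) with (- (kf (INR q) i * t)) by ring.
  apply cos_neg.
Qed.

Lemma D1_odd t : D1 (- t) = - D1 t.
Proof.
  unfold D1, D1s. rewrite <- (sum_eq (fun j => - (- kf (INR q) j * sin (kf (INR q) j * t)))).
  - induction (pred q). simpl; ring. simpl sum_f_R0. rewrite IHn. ring.
  - intros. replace (kf (INR q) i * - t) with (- (kf (INR q) i * t)) by ring. rewrite sin_neg. ring.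
Qed.

Lemma Qpos : 0 < Q.
Proof. pose proof Qge2; lra. Qed.

Lemma DD_pos t : - PI / Q < t < PI / Q -> 0 < DD t.
Proof.
  intros [H1 H2]. pose proof Qge2. pose proof PI_RGT_0.
  assert (PI / Q <= PI / 2).
  { unfold Rdiv. apply Rmult_le_compat_l. lra. apply Rinv_le_contravar; lra. }
  destruct (Rtotal_order t 0) as [Hn|[Hz|Hp]].
  - rewrite <- DD_even. set (u := - t).
    assert (0 < u < PI / Q) by (unfold u; split; [lra|]; unfold Rdiv in *; lra).
    assert (0 < sin u) by (apply sin_gt_0; lra).
    assert (0 < sin (Q * u)).
    { apply sin_gt_0. apply Rmult_lt_0_compat; lra.
      replace PI with (Q * (PI / Q)) by (field; lra). apply Rmult_lt_compat_l; lra. }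
    pose proof (DD_sin u). nra.
  - subst. rewrite DD0. lra.
  - assert (0 < sin t) by (apply sin_gt_0; lra).
    assert (0 < sin (Q * t)).
    { apply sin_gt_0. apply Rmult_lt_0_compat; lra.
      replace PI with (Q * (PI / Q)) by (field; lra). apply Rmult_lt_compat_l; lra. }
    pose proof (DD_sin t). nra.
Qed.

Lemma KEY t : - PI < t < PI -> DD t * D2 t - D1 t * D1 t <= 0.
Proof.
  intros Ht. destruct (Req_dec t 0) as [->|Hn].
  - rewrite D1_0, DD0. pose proof D2_0. pose proof Qpos. nra.
  - assert (Hs : sin t <> 0).
    { destruct (Rtotal_order t 0) as [Hl|[Hz|Hp]].
      + assert (0 < sin (- t)) by (apply sin_gt_0; lra). rewrite sin_neg in H. lra.
      + contradiction.
      + assert (0 < sin t) by (apply sin_gt_0; lra). lra. }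
    pose proof (KEYid t). pose proof (DD_abs t). pose proof Qpos.
    assert (0 < sin t * sin t) by (apply Rsqr_pos_lt; auto).
    assert (DD t * DD t - Q * Q <= 0) by nra.
    destruct (Rle_dec (DD t * D2 t - D1 t * D1 t) 0); auto. nra.
Qed.
End Dq.

Definition F q z := ln (DD q (PI * z)).
Definition Fp q z := PI * D1 q (PI * z) / DD q (PI * z).
Definition inI q z := - / INR q < z < / INR q.

Section Fq.
Variable q : nat.
Hypothesis hq : (2 <= q)%nat.

Lemma inI_t z : inI q z -> - PI / INR q < PI * z < PI / INR q.
Proof.
  unfold inI. intros [H1 H2]. pose proof (Qpos q hq). pose proof PI_RGT_0.
  unfold Rdiv. split.
  - replace (- PI * / INR q) with (PI * (- / INR q)) by ring. apply Rmult_lt_compat_l; lra.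
  - apply Rmult_lt_compat_l; lra.
Qed.

Lemma PIQ_le : PI / INR q <= PI / 2.
Proof.
  pose proof (Qge2 q hq). pose proof PI_RGT_0.
  unfold Rdiv. apply Rmult_le_compat_l. lra. apply Rinv_le_contravar; lra.
Qed.

Lemma F_deriv z : inI q z -> is_derive (F q) z (Fp q z).
Proof.
  intros Hz. pose proof (DD_pos q hq (PI * z) (inI_t z Hz)) as Hp.
  unfold F, Fp.
  assert (H1 : is_derive (fun z => DD q (PI * z)) z (PI * D1 q (PI * z))).
  { apply (is_derive_comp (DD q) (fun z => PI * z)). apply DD_deriv.
    auto_derive; auto; ring. }
  pose proof (is_derive_comp ln (fun z => DD q (PI * z)) z (/ DD q (PI * z)) _ (is_derive_ln _ Hp) H1) as H2.
  evar (l : R). replace (PI * D1 q (PI * z) / DD q (PI * z)) with l. exact H2.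
  unfold l; simpl; unfold scal; simpl; unfold mult; simpl. field. lra.
Qed.

Definition Hq t := D1 q t / DD q t.

Lemma Hq_noninc s t : - PI / INR q < s -> s <= t -> t < PI / INR q -> Hq t <= Hq s.
Proof.
  intros. pose proof (PIQ_le). pose proof PI_RGT_0. pose proof (Qpos q hq).
  apply (nonincr_of_deriv Hq (fun t => (D2 q t * DD q t - D1 q t * D2 q t * 0 - D1 q t * D1 q t) / (DD q t)^2)
           (- PI / INR q) (PI / INR q)); auto.
  - intros x Hx. pose proof (DD_pos q hq x Hx).
    unfold Hq. evar (l : R).
    replace ((D2 q x * DD q x - D1 q x * D2 q x * 0 - D1 q x * D1 q x) / DD q x ^ 2) with l.
    apply is_derive_div. apply D1_deriv. apply DD_deriv. lra.
    unfold l. field. lra.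
  - intros x Hx. pose proof (DD_pos q hq x Hx).
    assert (- PI < x < PI).
    { split; [|lra]. assert (- PI <= - PI / INR q). { unfold Rdiv in *. lra. } lra. }
    pose proof (KEY q hq x H6).
    unfold Rdiv. apply Rmult_le_0_r. nra. apply Rlt_le, Rinv_0_lt_compat. nra.
Qed.

Lemma Fp_noninc s t : inI q s -> inI q t -> s <= t -> Fp q t <= Fp q s.
Proof.
  intros Hs Ht Hst. pose proof (inI_t s Hs). pose proof (inI_t t Ht). pose proof PI_RGT_0.
  unfold Fp. unfold Rdiv. rewrite !Rmult_assoc.
  apply Rmult_le_compat_l. lra.
  apply (Hq_noninc (PI * s) (PI * t)); try lra. apply Rmult_le_compat_l; lra.
Qed.

Lemma F_slope_le s t p : inI q s -> inI q p -> s <= t -> t <= p -> Fp q p * (t - s) <= F q t - F q s.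
Proof.
  intros Hs Hp Hst Htp. unfold inI in *.
  destruct (mvt_in (F q) (Fp q) (- / INR q) (/ INR q) s t) as [c [Hc Heq]]; try lra.
  intros; apply F_deriv; auto.
  rewrite Heq. apply Rmult_le_compat_r. lra. apply Fp_noninc; unfold inI; lra.
Qed.

Lemma F_slope_ge s t p : inI q p -> inI q t -> p <= s -> s <= t -> F q t - F q s <= Fp q p * (t - s).
Proof.
  intros Hp Ht Hps Hst. unfold inI in *.
  destruct (mvt_in (F q) (Fp q) (- / INR q) (/ INR q) s t) as [c [Hc Heq]]; try lra.
  intros; apply F_deriv; auto.
  rewrite Heq. apply Rmult_le_compat_r. lra. apply Fp_noninc; unfold inI; lra.
Qed.

Lemma F_even z : F q (- z) = F q z.
Proof. unfold F. rewrite <- (DD_even q (PI * z)). f_equal. f_equal. ring. Qed.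

Lemma Fp_odd z : Fp q (- z) = - Fp q z.
Proof.
  unfold Fp. replace (PI * - z) with (- (PI * z)) by ring. rewrite D1_odd, DD_even.
  unfold Rdiv. ring.
Qed.

Lemma Fp0 : Fp q 0 = 0.
Proof. unfold Fp. rewrite Rmult_0_r, D1_0. unfold Rdiv. ring. Qed.

Lemma F_le_F0 z : inI q z -> F q z <= F q 0.
Proof.
  intros Hz. assert (H0 : inI q 0). { unfold inI in *. lra. }
  destruct (Rle_dec 0 z).
  - pose proof (F_slope_ge 0 z 0 H0 Hz (Rle_refl 0) r). rewrite Fp0 in H. lra.
  - pose proof (F_slope_le z 0 0 Hz H0 ltac:(lra) (Rle_refl 0)). rewrite Fp0 in H. lra.
Qed.

Lemma f0_eq_F z : inI q z -> f0 q z = F q z.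
Proof.
  intros Hz. pose proof (inI_t z Hz) as Ht. pose proof PIQ_le. pose proof PI_RGT_0.
  pose proof (DD_pos q hq (PI * z) Ht) as Hp.
  unfold f0, F. destruct (Req_EM_T (sin (PI * z)) 0) as [E|E].
  - assert (z = 0).
    { destruct (Rtotal_order z 0) as [Hl|[Hz0|Hg]]; auto.
      + assert (0 < sin (- (PI * z))) by (apply sin_gt_0; nra). rewrite sin_neg in H1. lra.
      + assert (0 < sin (PI * z)) by (apply sin_gt_0; nra). lra. }
    subst. rewrite Rmult_0_r, DD0; auto.
  - f_equal. pose proof (DD_sin q hq (PI * z)) as Hs.
    replace (PI * INR q * z) with (INR q * (PI * z)) by ring. rewrite <- Hs.
    replace (sin (PI * z) * DD q (PI * z) / sin (PI * z)) with (DD q (PI * z)) by (field; auto).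
    apply Rabs_right. lra.
Qed.

Lemma Derive_f0 z : inI q z -> Derive (f0 q) z = Fp q z.
Proof.
  intros Hz. apply is_derive_unique.
  apply is_derive_ext_loc with (F q).
  - unfold inI in Hz.
    assert (He : 0 < Rmin (z + / INR q) (/ INR q - z)) by (apply Rmin_pos; lra).
    exists (mkposreal _ He). intros y Hy. simpl in Hy.
    unfold ball in Hy; simpl in Hy; unfold AbsRing_ball, abs, minus, plus, opp in Hy; simpl in Hy.
    pose proof (Rmin_l (z + / INR q) (/ INR q - z)). pose proof (Rmin_r (z + / INR q) (/ INR q - z)).
    apply Rabs_def2 in Hy. symmetry. apply f0_eq_F. unfold inI. lra.
  - apply F_deriv; auto.
Qed.
End Fq.

Definition disj (P P' : R * R) : Prop :=
  forall z, ~ (fst P < z < snd P /\ fst P' < z < snd P').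

Fixpoint pw {A : Type} (Rl : A -> A -> Prop) (l : list A) : Prop :=
  match l with
  | [] => True
  | x :: l' => (forall y, In y l' -> Rl x y) /\ pw Rl l'
  end.

Fixpoint sumL (Fn : R * R -> R) (l : list (R * R)) : R :=
  match l with
  | [] => 0
  | p :: l' => Fn p + sumL Fn l'
  end.

Definition len (p : R * R) := snd p - fst p.

Lemma sumL_app Fn l1 l2 : sumL Fn (l1 ++ l2) = sumL Fn l1 + sumL Fn l2.
Proof. induction l1; simpl; [ring|rewrite IHl1; ring]. Qed.

Lemma sumL_le F1 F2 l : (forall p, In p l -> F1 p <= F2 p) -> sumL F1 l <= sumL F2 l.
Proof.
  induction l; simpl; intros H. lra.
  pose proof (H a (or_introl eq_refl)). assert (sumL F1 l <= sumL F2 l) by (apply IHl; auto). lra.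
Qed.

Lemma sumL_ext F1 F2 l : (forall p, In p l -> F1 p = F2 p) -> sumL F1 l = sumL F2 l.
Proof.
  induction l; simpl; intros H. lra.
  rewrite (H a (or_introl eq_refl)), IHl; auto.
Qed.

Lemma sumL_plus F1 F2 l : sumL (fun p => F1 p + F2 p) l = sumL F1 l + sumL F2 l.
Proof. induction l; simpl; [ring|rewrite IHl; ring]. Qed.

Lemma sumL_scal c Fn l : sumL (fun p => c * Fn p) l = c * sumL Fn l.
Proof. induction l; simpl; [ring|rewrite IHl; ring]. Qed.

Lemma sumL_opp Fn l : sumL (fun p => - Fn p) l = - sumL Fn l.
Proof. induction l; simpl; [ring|rewrite IHl; ring]. Qed.

Lemma sumL_flat_map Fn (G : R * R -> list (R * R)) l :
  sumL Fn (flat_map G l) = sumL (fun p => sumL Fn (G p)) l.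
Proof. induction l; simpl; auto. rewrite sumL_app, IHl. auto. Qed.

Lemma sumL_filter Fn (f : R * R -> bool) l :
  sumL Fn l = sumL Fn (filter f l) + sumL Fn (filter (fun p => negb (f p)) l).
Proof.
  induction l; simpl. ring. destruct (f a); simpl; rewrite IHl; ring.
Qed.

Lemma pw_filter {A} (Rl : A -> A -> Prop) f l : pw Rl l -> pw Rl (filter f l).
Proof.
  induction l; simpl; auto. intros [H1 H2]. destruct (f a); simpl; auto.
  split; auto. intros y Hy. apply filter_In in Hy. apply H1. tauto.
Qed.

Lemma pw_app {A} (Rl : A -> A -> Prop) l1 l2 :
  pw Rl l1 -> pw Rl l2 -> (forall x y, In x l1 -> In y l2 -> Rl x y) -> pw Rl (l1 ++ l2).
Proof.
  induction l1; simpl; auto. intros [H1 H2] H3 H4. split.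
  - intros y Hy. apply in_app_or in Hy. destruct Hy; auto.
  - apply IHl1; auto.
Qed.

Lemma disj_sym P P' : disj P P' -> disj P' P.
Proof. unfold disj. intros H z [H1 H2]. apply (H z). tauto. Qed.

Lemma disj_order P P' : fst P < snd P -> fst P' < snd P' -> disj P P' ->
  snd P' <= fst P \/ snd P <= fst P'.
Proof.
  destruct P as [l r], P' as [l' r']; simpl. intros H1 H2 H.
  destruct (Rle_dec r' l); auto. destruct (Rle_dec r l'); auto. exfalso.
  apply (H ((Rmax l l' + Rmin r r') / 2)); simpl.
  unfold Rmax, Rmin. destruct (Rle_dec l l'), (Rle_dec r r'); repeat split; lra.
Qed.

Definition Rleb (x y : R) : bool := if Rle_dec x y then true else false.

Lemma sort_sum (U : R -> R) : forall n (l : list (R * R)) A B,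
  (length l <= n)%nat ->
  (forall s t, A <= s -> s <= t -> t <= B -> U s <= U t) -> A <= B ->
  (forall p, In p l -> A <= fst p /\ fst p < snd p /\ snd p <= B) ->
  pw disj l ->
  sumL (fun p => U (snd p) - U (fst p)) l <= U B - U A.
Proof.
  induction n; intros l A B Hlen HU HAB Hin Hpw;
    pose proof (HU A B ltac:(lra) ltac:(lra) ltac:(lra)).
  - destruct l; simpl in *; [lra|lia].
  - destruct l as [|p l']; simpl. lra.
    simpl in Hlen, Hpw. destruct Hpw as [Hp Hpw].
    destruct (Hin p (or_introl eq_refl)) as [Hp1 [Hp2 Hp3]].
    rewrite (sumL_filter _ (fun p' => Rleb (snd p') (fst p)) l').
    set (L1 := filter (fun p' => Rleb (snd p') (fst p)) l').
    set (L2 := filter (fun p' => negb (Rleb (snd p') (fst p))) l').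
    assert (S1 : sumL (fun p => U (snd p) - U (fst p)) L1 <= U (fst p) - U A).
    { apply IHn.
      - unfold L1. pose proof (filter_length_le (fun p' => Rleb (snd p') (fst p)) l'). lia.
      - intros; apply HU; lra.
      - lra.
      - intros p' Hp'. unfold L1 in Hp'. apply filter_In in Hp'. destruct Hp' as [Hi Hb].
        unfold Rleb in Hb. destruct (Rle_dec (snd p') (fst p)); [|discriminate].
        destruct (Hin p' (or_intror Hi)). lra.
      - apply pw_filter; auto. }
    assert (S2 : sumL (fun p => U (snd p) - U (fst p)) L2 <= U B - U (snd p)).
    { apply IHn.
      - unfold L2. pose proof (filter_length_le (fun p' => negb (Rleb (snd p') (fst p))) l'). lia.
      - intros; apply HU; lra.
      - lra.
      - intros p' Hp'. unfold L2 in Hp'. apply filter_In in Hp'. destruct Hp' as [Hi Hb].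
        unfold Rleb in Hb. destruct (Rle_dec (snd p') (fst p)); [discriminate|].
        destruct (Hin p' (or_intror Hi)) as [Q1 [Q2 Q3]].
        destruct (disj_order p p' Hp2 Q2 (Hp p' Hi)); [lra|]. lra.
      - apply pw_filter; auto. }
    assert (U A <= U (fst p)) by (apply HU; lra).
    lra.
Qed.

Lemma sumL_zero l : sumL (fun _ => 0) l = 0.
Proof. induction l; simpl; auto. rewrite IHl; ring. Qed.

Lemma sort_sum_gen (U : R -> R) (l : list (R * R)) A B :
  (forall s t, A <= s -> s <= t -> t <= B -> U s <= U t) -> A <= B ->
  (forall p, In p l -> A <= fst p /\ fst p <= snd p /\ snd p <= B) ->
  pw disj l ->
  sumL (fun p => U (snd p) - U (fst p)) l <= U B - U A.
Proof.
  intros HU HAB Hin Hpw.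
  rewrite (sumL_filter _ (fun p => Rleb (snd p) (fst p)) l).
  rewrite (sumL_ext _ (fun _ => 0)). rewrite sumL_zero.
  - assert (sumL (fun p => U (snd p) - U (fst p)) (filter (fun p => negb (Rleb (snd p) (fst p))) l)
            <= U B - U A).
    { apply (sort_sum U (length (filter (fun p => negb (Rleb (snd p) (fst p))) l))); auto.
      intros p Hp. apply filter_In in Hp. destruct Hp as [Hi Hb].
      unfold Rleb in Hb. destruct (Rle_dec (snd p) (fst p)); [discriminate|].
      destruct (Hin p Hi). lra.
      apply pw_filter; auto. }
    lra.
  - intros p Hp. apply filter_In in Hp. destruct Hp as [Hi Hb].
    unfold Rleb in Hb. destruct (Rle_dec (snd p) (fst p)); [|discriminate].
    destruct (Hin p Hi). replace (snd p) with (fst p) by lra. ring.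
Qed.

Lemma bathtub_inc (G : R -> R) (mu A B r : R) (l : list (R * R)) :
  0 <= r -> A + r <= B ->
  (forall s t, A <= s -> s <= t -> t <= A + r -> mu * (t - s) <= G t - G s) ->
  (forall s t, A + r <= s -> s <= t -> t <= B -> G t - G s <= mu * (t - s)) ->
  (forall p, In p l -> A <= fst p /\ fst p <= snd p /\ snd p <= B) ->
  pw disj l ->
  sumL (fun p => G (snd p) - G (fst p)) l <= G (A + r) - G A + mu * (sumL len l - r).
Proof.
  intros Hr HrB H1 H2 Hin Hpw.
  set (w := fun z => G z - mu * z).
  set (U := fun z => w (Rmin z (A + r))).
  assert (HU : forall s t, A <= s -> s <= t -> t <= B -> U s <= U t).
  { intros s t Hs Hst Ht. unfold U, w.
    pose proof (Rmin_l s (A + r)). pose proof (Rmin_r s (A+r)).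
    pose proof (Rmin_l t (A + r)). pose proof (Rmin_r t (A+r)).
    assert (Rmin s (A + r) <= Rmin t (A + r)).
    { unfold Rmin. destruct (Rle_dec s (A+r)), (Rle_dec t (A+r)); lra. }
    assert (A <= Rmin s (A + r)). { unfold Rmin. destruct (Rle_dec s (A+r)); lra. }
    pose proof (H1 (Rmin s (A + r)) (Rmin t (A + r))). lra. }
  assert (Hw : forall p, In p l -> w (snd p) - w (fst p) <= U (snd p) - U (fst p)).
  { intros p Hp. destruct (Hin p Hp) as [Q1 [Q2 Q3]]. unfold U, w.
    set (s := fst p) in *. set (t := snd p) in *.
    unfold Rmin. destruct (Rle_dec s (A+r)), (Rle_dec t (A+r)).
    - lra.
    - pose proof (H2 (A + r) t). lra.
    - lra.
    - pose proof (H2 s t). lra. }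
  pose proof (sort_sum_gen U l A B HU ltac:(lra) Hin Hpw) as HS.
  pose proof (sumL_le _ _ l Hw) as HW.
  assert (E : sumL (fun p => G (snd p) - G (fst p)) l =
              sumL (fun p => w (snd p) - w (fst p)) l + mu * sumL len l).
  { rewrite <- sumL_scal, <- sumL_plus. apply sumL_ext. intros. unfold w, len. ring. }
  assert (EU : U B - U A = G (A + r) - G A - mu * r).
  { unfold U, w. rewrite Rmin_right by lra. rewrite Rmin_left by lra. ring. }
  lra.
Qed.

Lemma bathtub_dec (G : R -> R) (mu A B r : R) (l : list (R * R)) :
  0 <= r -> A <= B - r ->
  (forall s t, A <= s -> s <= t -> t <= B - r -> mu * (t - s) <= G t - G s) ->
  (forall s t, B - r <= s -> s <= t -> t <= B -> G t - G s <= mu * (t - s)) ->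
  (forall p, In p l -> A <= fst p /\ fst p <= snd p /\ snd p <= B) ->
  pw disj l ->
  sumL (fun p => G (fst p) - G (snd p)) l <= G (B - r) - G B + mu * (r - sumL len l).
Proof.
  intros Hr HrB H1 H2 Hin Hpw.
  set (w := fun z => - G z + mu * z).
  set (U := fun z => w (Rmax z (B - r))).
  assert (HU : forall s t, A <= s -> s <= t -> t <= B -> U s <= U t).
  { intros s t Hs Hst Ht. unfold U, w.
    assert (Rmax s (B - r) <= Rmax t (B - r)).
    { unfold Rmax. destruct (Rle_dec s (B-r)), (Rle_dec t (B-r)); lra. }
    assert (Rmax t (B - r) <= B). { unfold Rmax. destruct (Rle_dec t (B-r)); lra. }
    assert (B - r <= Rmax s (B - r)). { unfold Rmax. destruct (Rle_dec s (B-r)); lra. }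
    pose proof (H2 (Rmax s (B - r)) (Rmax t (B - r))). lra. }
  assert (Hw : forall p, In p l -> w (snd p) - w (fst p) <= U (snd p) - U (fst p)).
  { intros p Hp. destruct (Hin p Hp) as [Q1 [Q2 Q3]]. unfold U, w.
    set (s := fst p) in *. set (t := snd p) in *.
    unfold Rmax. destruct (Rle_dec s (B-r)), (Rle_dec t (B-r)).
    - pose proof (H1 s t). lra.
    - pose proof (H1 s (B - r)). lra.
    - lra.
    - lra. }
  pose proof (sort_sum_gen U l A B HU ltac:(lra) Hin Hpw) as HS.
  pose proof (sumL_le _ _ l Hw) as HW.
  assert (E : sumL (fun p => G (fst p) - G (snd p)) l =
              sumL (fun p => w (snd p) - w (fst p)) l - mu * sumL len l).
  { rewrite <- sumL_scal. unfold Rminus at 2. rewrite <- sumL_opp, <- sumL_plus.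
    apply sumL_ext. intros. unfold w, len. ring. }
  assert (EU : U B - U A = G (B - r) - G B + mu * r).
  { unfold U, w. rewrite Rmax_left by lra. rewrite Rmax_right by lra. ring. }
  lra.
Qed.

Lemma pw_flat_map {A B : Type} (Rl : B -> B -> Prop) (G : A -> list B) (l : list A) :
  (forall p, In p l -> pw Rl (G p)) ->
  pw (fun p p' => forall c c', In c (G p) -> In c' (G p') -> Rl c c') l ->
  pw Rl (flat_map G l).
Proof.
  induction l as [|p l IH]; simpl; auto. intros H1 [H2 H3]. apply pw_app; auto.
  intros c c' Hc Hc'. apply in_flat_map in Hc'. destruct Hc' as [p' [Hp' Hc']].
  apply (H2 p' Hp'); auto.
Qed.

Lemma pw_impl {A : Type} (R1 R2 : A -> A -> Prop) (l : list A) :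
  (forall p p', In p l -> In p' l -> R1 p p' -> R2 p p') -> pw R1 l -> pw R2 l.
Proof.
  induction l as [|p l IH]; simpl; auto. intros H [H1 H2]. split.
  - intros y Hy. apply H; auto.
  - apply IH; auto.
Qed.

Lemma int_between_0 (m : Z) : -1 < IZR m < 1 -> m = 0%Z.
Proof.
  intros [H1 H2]. apply lt_IZR in H1. apply lt_IZR in H2. lia.
Qed.

Lemma lim_le (A B C Q : R) : 2 <= Q -> 0 <= C -> (forall n, A <= B + C / Q ^ n) -> A <= B.
Proof.
  intros HQ HC H. destruct (Rle_dec A B) as [|Hn]; auto. exfalso.
  assert (Hpow : forall n, INR n + 1 <= Q ^ n).
  { induction n. simpl. lra. rewrite S_INR. simpl. pose proof (pos_INR n). nra. }
  set (e := A - B). assert (He : 0 < e) by (unfold e; lra).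
  destruct (archimed_cor1 (e / (C + 1))) as [N [HN1 HN2]].
  { apply Rdiv_lt_0_compat; lra. }
  pose proof (H N). pose proof (Hpow N).
  assert (0 < INR N) by (apply lt_0_INR; auto).
  assert (C / Q ^ N <= (C + 1) / INR N).
  { unfold Rdiv. apply Rmult_le_compat; try lra.
    apply Rlt_le, Rinv_0_lt_compat; lra. apply Rinv_le_contravar; lra. }
  assert ((C + 1) / INR N < e).
  { apply (Rmult_lt_compat_l (C + 1)) in HN1; [|lra].
    replace ((C + 1) * (e / (C + 1))) with e in HN1 by (field; lra). unfold Rdiv. lra. }
  unfold e in *. lra.
Qed.

Section Dyn.
Variable q : nat.
Hypothesis hq : (2 <= q)%nat.
Variables (a beta L : R) (psi g : R -> R).
Let Q := INR q.
Hypothesis Hper : forall x, psi (x + 1) = psi x.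
Hypothesis Heq : forall x, a <= x <= a + / Q -> g x + psi x - psi (Q * x) = beta.
Hypothesis Hlip : forall x y, Rabs (psi x - psi y) <= L * Rabs (x - y).

Lemma Q2 : 2 <= Q.
Proof. unfold Q. apply (le_INR 2 q) in hq. simpl in hq. lra. Qed.

Lemma invQ : 0 < / Q <= / 2.
Proof. pose proof Q2. split. apply Rinv_0_lt_compat; lra. apply Rinv_le_contravar; lra. Qed.

Lemma psi_nat x n : psi (x + INR n) = psi x.
Proof.
  induction n. simpl. rewrite Rplus_0_r; auto.
  rewrite S_INR, <- Rplus_assoc, Hper; auto.
Qed.

Lemma psi_int x m : psi (x + IZR m) = psi x.
Proof.
  destruct m.
  - simpl. rewrite Rplus_0_r; auto.
  - rewrite <- positive_nat_Z, <- INR_IZR_INZ. apply psi_nat.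
  - rewrite <- Pos2Z.opp_pos, opp_IZR, <- positive_nat_Z, <- INR_IZR_INZ.
    rewrite <- (psi_nat (x + - INR (Pos.to_nat p)) (Pos.to_nat p)). f_equal. ring.
Qed.

Definition nz z := Int_part (z - Q * a).
Definition tau z := a + (z - Q * a - IZR (nz z)) / Q.

Lemma tau_in z : a <= tau z < a + / Q.
Proof.
  pose proof Q2. unfold tau, nz. destruct (base_Int_part (z - Q * a)) as [H1 H2].
  split.
  - assert (0 <= (z - Q * a - IZR (Int_part (z - Q * a))) / Q).
    { unfold Rdiv. apply Rmult_le_pos. lra. apply Rlt_le, Rinv_0_lt_compat; lra. } lra.
  - assert ((z - Q * a - IZR (Int_part (z - Q * a))) / Q < / Q).
    { unfold Rdiv. rewrite <- (Rmult_1_l (/ Q)) at 2. apply Rmult_lt_compat_r. apply Rinv_0_lt_compat; lra. lra. } lra.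
Qed.

Lemma tau_Q z : Q * tau z = z - IZR (nz z).
Proof. pose proof Q2. unfold tau. field. lra. Qed.

Lemma eq_tau z : psi z = psi (tau z) + g (tau z) - beta.
Proof.
  pose proof (tau_in z). pose proof (Heq (tau z) ltac:(lra)) as He.
  rewrite tau_Q in He.
  replace (psi (z - IZR (nz z))) with (psi z) in He. lra.
  rewrite <- (psi_int (z - IZR (nz z)) (nz z)). f_equal. ring.
Qed.

Lemma eq_end : psi (a + / Q) + g (a + / Q) = psi a + g a.
Proof.
  pose proof Q2. pose proof invQ.
  pose proof (Heq a ltac:(lra)) as H1. pose proof (Heq (a + / Q) ltac:(lra)) as H2.
  replace (Q * (a + / Q)) with (Q * a + 1) in H2 by (field; lra).
  rewrite Hper in H2. lra.
Qed.

Definition pre (p : R * R) : list (R * R) :=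
  if Rle_dec (tau (fst p)) (tau (snd p)) then [(tau (fst p), tau (snd p))]
  else [(tau (fst p), a + / Q); (a, tau (snd p))].

Definition good (p : R * R) := 0 <= snd p - fst p < 1.

Lemma pre_cases u v : 0 <= v - u < 1 ->
  (tau u <= tau v /\ nz v = nz u) \/ (tau v < tau u /\ nz v = (nz u + 1)%Z).
Proof.
  intros Huv. pose proof Q2. pose proof (tau_in u). pose proof (tau_in v).
  pose proof (tau_Q u). pose proof (tau_Q v).
  assert (Hd : IZR (nz v - nz u) = (v - u) - Q * (tau v - tau u)).
  { rewrite minus_IZR. lra. }
  assert (Q * (tau v - tau u) < 1).
  { assert (tau v - tau u < / Q) by lra. apply (Rmult_lt_compat_l Q) in H4; [|lra].
    rewrite Rinv_r in H4; lra. }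
  assert (-1 < Q * (tau v - tau u)).
  { assert (- / Q < tau v - tau u) by lra. apply (Rmult_lt_compat_l Q) in H5; [|lra].
    replace (Q * - / Q) with (-1) in H5 by (field; lra). lra. }
  assert (Hr : (-1 < nz v - nz u < 2)%Z).
  { split; apply lt_IZR; rewrite Hd; simpl; lra. }
  assert (Hc : (nz v - nz u = 0 \/ nz v - nz u = 1)%Z) by lia.
  destruct Hc as [Hc|Hc].
  - left. split; [|lia]. rewrite Hc in Hd. simpl in Hd.
    assert (0 <= Q * (tau v - tau u)) by lra. nra.
  - right. split; [|lia]. rewrite Hc in Hd. simpl in Hd.
    assert (Q * (tau v - tau u) < 0) by lra. nra.
Qed.

Definition mapsto (j : nat) (p : R * R) (A B : R) :=
  exists m : Z, A <= Q ^ j * fst p - IZR m /\ Q ^ j * snd p - IZR m <= B.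

Lemma pre_in u v p : good (u, v) -> In p (pre (u, v)) -> a <= fst p /\ fst p <= snd p /\ snd p <= a + / Q.
Proof.
  intros Hg Hp. unfold good in Hg; simpl in Hg. pose proof (tau_in u). pose proof (tau_in v).
  unfold pre in Hp; simpl in Hp.
  destruct (Rle_dec (tau u) (tau v)); simpl in Hp.
  - destruct Hp as [<-|[]]. simpl. lra.
  - destruct Hp as [<-|[<-|[]]]; simpl; lra.
Qed.

Lemma pre_len u v : good (u, v) -> sumL len (pre (u, v)) = (v - u) / Q.
Proof.
  intros Hg. pose proof Q2 as HQ. pose proof (tau_Q u) as Tu. pose proof (tau_Q v) as Tv.
  unfold good in Hg; simpl in Hg.
  unfold pre; simpl. destruct (pre_cases u v Hg) as [[E1 E2]|[E1 E2]];
  destruct (Rle_dec (tau u) (tau v)); try lra; simpl; unfold len; simpl.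
  - rewrite E2 in Tv. replace (v - u) with (Q * (tau v - tau u)) by lra. field. lra.
  - rewrite E2, plus_IZR in Tv. simpl in Tv.
    replace (v - u) with (Q * (tau v - tau u) + 1) by lra. field. lra.
Qed.

Lemma pre_psi u v : good (u, v) ->
  psi v - psi u = sumL (fun p => psi (snd p) - psi (fst p) + (g (snd p) - g (fst p))) (pre (u, v)).
Proof.
  intros Hg. pose proof (eq_tau u). pose proof (eq_tau v). pose proof eq_end.
  unfold pre; simpl. destruct (Rle_dec (tau u) (tau v)); simpl; lra.
Qed.

Lemma pre_map u v p : good (u, v) -> In p (pre (u, v)) -> mapsto 1 p u v.
Proof.
  intros Hg Hp. pose proof Q2 as HQ. pose proof (tau_Q u) as Tu. pose proof (tau_Q v) as Tv.
  pose proof (tau_in u) as Iu. pose proof (tau_in v) as Iv.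
  unfold good in Hg; simpl in Hg. unfold mapsto. rewrite pow_1.
  unfold pre in Hp; simpl in Hp.
  destruct (pre_cases u v Hg) as [[E1 E2]|[E1 E2]];
  destruct (Rle_dec (tau u) (tau v)); try lra; simpl in Hp.
  - destruct Hp as [<-|[]]; simpl. exists (- nz u)%Z. rewrite opp_IZR. rewrite E2 in Tv. lra.
  - destruct Hp as [<-|[<-|[]]]; simpl.
    + exists (- nz u)%Z. rewrite opp_IZR. split. lra.
      rewrite E2, plus_IZR in Tv. simpl in Tv.
      replace (Q * (a + / Q)) with (Q * a + 1) by (field; lra).
      assert (Q * a <= Q * tau v) by (apply Rmult_le_compat_l; lra). lra.
    + exists (- nz v)%Z. rewrite opp_IZR. split; [|lra].
      rewrite E2, plus_IZR in Tv. simpl in Tv. rewrite E2, plus_IZR. simpl.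
      assert (Hl : Q * tau u < Q * (a + / Q)) by (apply Rmult_lt_compat_l; lra).
      replace (Q * (a + / Q)) with (Q * a + 1) in Hl by (field; lra). lra.
Qed.

Lemma pre_disj p : pw disj (pre p).
Proof.
  unfold pre. destruct (Rle_dec (tau (fst p)) (tau (snd p))); simpl.
  - split; auto. intros y [].
  - split; [|split; auto; intros y []].
    intros y [<-|[]]. unfold disj; simpl. intros z [H1 H2]. pose proof (tau_in (snd p)). lra.
Qed.

Fixpoint lev (x y : R) (k : nat) : list (R * R) :=
  match k with
  | O => [(x, y)]
  | S k' => flat_map pre (lev x y k')
  end.

Fixpoint allp (x y : R) (n : nat) : list (R * R) :=
  match n with
  | O => []
  | S n' => allp x y n' ++ lev x y (S n')
  end.

Definition ginc (p : R * R) := g (snd p) - g (fst p).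
Definition pinc (p : R * R) := psi (snd p) - psi (fst p).

Section Arc.
Variables x y : R.
Hypothesis Hxy : 0 <= y - x < 1.

Lemma lev_good k p : In p (lev x y k) -> good p.
Proof.
  revert p. induction k; intros p Hp; simpl in Hp.
  - destruct Hp as [<-|[]]. unfold good; simpl; auto.
  - apply in_flat_map in Hp. destruct Hp as [[u v] [H1 H2]].
    pose proof (pre_in u v p (IHk _ H1) H2). pose proof invQ. unfold good. lra.
Qed.

Lemma lev_inC k p : In p (lev x y (S k)) -> a <= fst p /\ fst p <= snd p /\ snd p <= a + / Q.
Proof.
  intros Hp. simpl in Hp. apply in_flat_map in Hp. destruct Hp as [[u v] [H1 H2]].
  apply (pre_in u v p (lev_good k _ H1) H2).
Qed.

Lemma lev_len k : sumL len (lev x y k) = (y - x) / Q ^ k.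
Proof.
  pose proof Q2. induction k; simpl.
  - unfold len; simpl. field.
  - rewrite sumL_flat_map. rewrite (sumL_ext _ (fun p => / Q * len p)).
    + rewrite sumL_scal, IHk. field. split. apply pow_nonzero; lra. lra.
    + intros [u v] Hp. rewrite pre_len. unfold len; simpl. field. lra. apply (lev_good k); auto.
Qed.

Lemma allp_len n : sumL len (allp x y n) = (y - x) / (Q - 1) * (1 - / Q ^ n).
Proof.
  pose proof Q2. induction n.
  - simpl. field. lra.
  - change (allp x y (S n)) with (allp x y n ++ lev x y (S n)).
    rewrite sumL_app, IHn, lev_len. simpl.
    assert (Q ^ n <> 0) by (apply pow_nonzero; lra). field. lra.
Qed.

Lemma lev_psi k : psi y - psi x = sumL ginc (allp x y k) + sumL pinc (lev x y k).
Proof.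
  induction k.
  - unfold pinc; simpl. ring.
  - change (allp x y (S k)) with (allp x y k ++ lev x y (S k)).
    change (lev x y (S k)) with (flat_map pre (lev x y k)).
    assert (E : sumL pinc (lev x y k) = sumL ginc (flat_map pre (lev x y k)) + sumL pinc (flat_map pre (lev x y k))).
    { rewrite <- sumL_plus, sumL_flat_map. apply sumL_ext.
      intros [u v] Hp. unfold pinc at 1. simpl. rewrite (pre_psi u v (lev_good k _ Hp)).
      apply sumL_ext. intros. unfold pinc, ginc. ring. }
    rewrite sumL_app, IHk, E. ring.
Qed.

Lemma lev_rem k : Rabs (sumL pinc (lev x y k)) <= L * ((y - x) / Q ^ k).
Proof.
  rewrite <- lev_len, <- sumL_scal. apply Rabs_le. split.
  - rewrite <- sumL_opp. apply sumL_le. intros p Hp. pose proof (lev_good k p Hp). unfold good in H.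
    pose proof (Hlip (snd p) (fst p)). rewrite (Rabs_right (snd p - fst p)) in H0 by lra. unfold pinc, len.
    pose proof (Rle_abs (- (psi (snd p) - psi (fst p)))). rewrite Rabs_Ropp in H1. lra.
  - apply sumL_le. intros p Hp. pose proof (lev_good k p Hp). unfold good in H.
    pose proof (Hlip (snd p) (fst p)). rewrite (Rabs_right (snd p - fst p)) in H0 by lra. unfold pinc, len.
    pose proof (Rle_abs (psi (snd p) - psi (fst p))). lra.
Qed.

End Arc.

Lemma mapsto_comp j p u v A B : mapsto 1 p u v -> mapsto j (u, v) A B -> mapsto (S j) p A B.
Proof.
  intros [m0 [H1 H2]] [m [H3 H4]]. simpl in *. rewrite Rmult_1_r in H1, H2.
  pose proof Q2. assert (Hp : 0 < Q ^ j) by (apply pow_lt; lra).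
  exists (Z.of_nat (q ^ j) * m0 + m)%Z.
  rewrite plus_IZR, mult_IZR, <- INR_IZR_INZ, pow_INR. fold Q. replace (Q ^ S j) with (Q * Q ^ j) by (simpl; ring).
  split.
  - assert (Q ^ j * u <= Q ^ j * (Q * fst p - IZR m0)) by (apply Rmult_le_compat_l; lra). nra.
  - assert (Q ^ j * (Q * snd p - IZR m0) <= Q ^ j * v) by (apply Rmult_le_compat_l; lra). nra.
Qed.

Lemma mapsto_0 p A B : A <= fst p -> snd p <= B -> mapsto 0 p A B.
Proof. intros. exists 0%Z. simpl. lra. Qed.

Lemma mapsto_int j p A B z : mapsto j p A B -> fst p < z < snd p ->
  exists m : Z, A < Q ^ j * z - IZR m < B.
Proof.
  intros [m [H1 H2]] Hz. exists m. pose proof Q2. assert (0 < Q ^ j) by (apply pow_lt; lra).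
  assert (Q ^ j * fst p < Q ^ j * z) by (apply Rmult_lt_compat_l; lra).
  assert (Q ^ j * z < Q ^ j * snd p) by (apply Rmult_lt_compat_l; lra). lra.
Qed.

Section Arc2.
Variables x y : R.
Hypothesis Hxy : 0 <= y - x < 1.

Lemma lev_map k p : In p (lev x y k) ->
  mapsto k p x y /\ forall j, (j < k)%nat -> mapsto j p a (a + / Q).
Proof.
  revert p. induction k; intros p Hp.
  - simpl in Hp. destruct Hp as [<-|[]]. split. apply mapsto_0; simpl; lra. intros; lia.
  - pose proof (lev_inC x y Hxy k p Hp) as HC.
    simpl in Hp. apply in_flat_map in Hp. destruct Hp as [[u v] [H1 H2]].
    pose proof (pre_map u v p (lev_good x y Hxy k _ H1) H2) as Hm.
    destruct (IHk _ H1) as [IH1 IH2]. split.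
    + apply (mapsto_comp k p u v); auto.
    + intros j Hj. destruct j.
      * apply mapsto_0; lra.
      * apply (mapsto_comp j p u v); auto. apply IH2. lia.
Qed.

Lemma lev_pw k : pw disj (lev x y k).
Proof.
  induction k.
  - simpl. split; auto. intros _ [].
  - simpl. apply pw_flat_map.
    + intros; apply pre_disj.
    + destruct k.
      * simpl. split; auto. intros _ [].
      * apply (pw_impl disj); auto.
        intros [u v] [u' v'] Hp Hp' Hd c c' Hc Hc' z [Hz1 Hz2].
        pose proof (lev_inC x y Hxy k _ Hp) as C1. pose proof (lev_inC x y Hxy k _ Hp') as C2.
        simpl in C1, C2.
        pose proof (pre_map u v c (lev_good x y Hxy _ _ Hp) Hc) as M1.
        pose proof (pre_map u' v' c' (lev_good x y Hxy _ _ Hp') Hc') as M2.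
        destruct (mapsto_int 1 c u v z M1 Hz1) as [m1 Hm1].
        destruct (mapsto_int 1 c' u' v' z M2 Hz2) as [m2 Hm2].
        rewrite pow_1 in Hm1, Hm2. pose proof invQ.
        assert (m1 = m2).
        { assert (E : (m2 - m1 = 0)%Z). apply int_between_0. rewrite minus_IZR. lra. lia. }
        subst m2. apply (Hd (Q * z - IZR m1)). simpl. lra.
Qed.

Hypothesis HK : a + / Q <= x /\ y <= a + 1.

Lemma cross_disj j k p p' : (j < k)%nat -> In p (lev x y j) -> In p' (lev x y k) -> disj p p'.
Proof.
  intros Hjk Hp Hp' z [Hz1 Hz2].
  destruct (lev_map j p Hp) as [M1 _]. destruct (lev_map k p' Hp') as [_ M2].
  specialize (M2 j Hjk).
  destruct (mapsto_int j p x y z M1 Hz1) as [m1 Hm1].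
  destruct (mapsto_int j p' a (a + / Q) z M2 Hz2) as [m2 Hm2].
  pose proof invQ.
  destruct (Z_le_gt_dec m2 m1) as [Hle|Hgt].
  - apply IZR_le in Hle. lra.
  - assert (Hge : (m1 + 1 <= m2)%Z) by lia. apply IZR_le in Hge. rewrite plus_IZR in Hge. simpl in Hge. lra.
Qed.

Lemma allp_in n p : In p (allp x y n) -> exists j, (1 <= j <= n)%nat /\ In p (lev x y j).
Proof.
  induction n; simpl; intros Hp. contradiction.
  apply in_app_or in Hp. destruct Hp as [Hp|Hp].
  - destruct (IHn Hp) as [j [Hj1 Hj2]]. exists j. split; auto. lia.
  - exists (S n). split; auto. lia.
Qed.

Lemma allp_pw n : pw disj (allp x y n).
Proof.
  induction n.
  - simpl; auto.
  - change (allp x y (S n)) with (allp x y n ++ lev x y (S n)).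
    apply pw_app; auto. apply lev_pw.
    intros p p' Hp Hp'. destruct (allp_in n p Hp) as [j [Hj Hj']].
    apply (cross_disj j (S n)); auto. lia.
Qed.

Lemma allp_inC n p : In p (allp x y n) -> a <= fst p /\ fst p <= snd p /\ snd p <= a + / Q.
Proof.
  intros Hp. destruct (allp_in n p Hp) as [j [Hj Hj']]. destruct j. lia.
  apply (lev_inC x y Hxy j); auto.
Qed.
End Arc2.

Lemma L_nonneg : 0 <= L.
Proof.
  pose proof (Hlip 1 0). rewrite (Rabs_right (1 - 0)) in H by lra.
  pose proof (Rabs_pos (psi 1 - psi 0)). lra.
Qed.

Lemma Q1pos : 0 < Q - 1.
Proof. pose proof Q2. lra. Qed.

Lemma T_i x y mu : a + / Q <= x -> x < y -> y <= a + 1 ->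
  let r := (y - x) / (Q - 1) in
  (forall s t, a <= s -> s <= t -> t <= a + r -> mu * (t - s) <= g t - g s) ->
  (forall s t, a + r <= s -> s <= t -> t <= a + / Q -> g t - g s <= mu * (t - s)) ->
  psi y - psi x <= g (a + r) - g a.
Proof.
  intros Hx Hxy Hy r H1 H2. pose proof Q2. pose proof Q1pos. pose proof L_nonneg.
  assert (Hg : 0 <= y - x < 1) by (pose proof invQ; lra).
  assert (Hr0 : 0 <= r) by (unfold r; apply Rmult_le_pos; [lra|apply Rlt_le, Rinv_0_lt_compat; lra]).
  assert (HrQ : r <= / Q).
  { unfold r. apply Rle_trans with ((1 - / Q) / (Q - 1)).
    - unfold Rdiv. apply Rmult_le_compat_r. apply Rlt_le, Rinv_0_lt_compat; lra. lra.
    - right. field. lra. }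
  apply (lim_le _ _ (Rabs mu * r + L * (y - x)) Q); auto.
  { pose proof (Rabs_pos mu). nra. }
  intros n. rewrite (lev_psi x y Hg n).
  pose proof (lev_rem x y Hg n) as Hrem. pose proof (Rle_abs (sumL pinc (lev x y n))).
  assert (Hb := bathtub_inc g mu a (a + / Q) r (allp x y n) Hr0 ltac:(lra) H1 H2
                 (allp_inC x y Hg n) (allp_pw x y Hg (conj Hx Hy) n)).
  fold ginc in Hb.
  rewrite (allp_len x y Hg n) in Hb. fold r in Hb.
  assert (HQn : 0 < Q ^ n) by (apply pow_lt; lra).
  assert (E : mu * (r * (1 - / Q ^ n) - r) = - (mu * r) / Q ^ n) by (field; lra).
  rewrite E in Hb.
  assert (- (mu * r) / Q ^ n <= Rabs mu * r / Q ^ n).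
  { unfold Rdiv. apply Rmult_le_compat_r. apply Rlt_le, Rinv_0_lt_compat; auto.
    pose proof (Rle_abs (- mu)) as Ha. rewrite Rabs_Ropp in Ha. nra. }
  assert (L * ((y - x) / Q ^ n) = L * (y - x) / Q ^ n) by (field; lra).
  assert ((Rabs mu * r + L * (y - x)) / Q ^ n = Rabs mu * r / Q ^ n + L * (y - x) / Q ^ n) by (field; lra).
  lra.
Qed.

Lemma T_i' x y mu : a + / Q <= x -> x < y -> y <= a + 1 ->
  let r := (y - x) / (Q - 1) in
  (forall s t, a <= s -> s <= t -> t <= a + / Q - r -> mu * (t - s) <= g t - g s) ->
  (forall s t, a + / Q - r <= s -> s <= t -> t <= a + / Q -> g t - g s <= mu * (t - s)) ->
  psi x - psi y <= g (a + / Q - r) - g (a + / Q).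
Proof.
  intros Hx Hxy Hy r H1 H2. pose proof Q2. pose proof Q1pos. pose proof L_nonneg.
  assert (Hg : 0 <= y - x < 1) by (pose proof invQ; lra).
  assert (Hr0 : 0 <= r) by (unfold r; apply Rmult_le_pos; [lra|apply Rlt_le, Rinv_0_lt_compat; lra]).
  assert (HrQ : r <= / Q).
  { unfold r. apply Rle_trans with ((1 - / Q) / (Q - 1)).
    - unfold Rdiv. apply Rmult_le_compat_r. apply Rlt_le, Rinv_0_lt_compat; lra. lra.
    - right. field. lra. }
  apply (lim_le _ _ (Rabs mu * r + L * (y - x)) Q); auto.
  { pose proof (Rabs_pos mu). nra. }
  intros n. pose proof (lev_psi x y Hg n) as Hps.
  pose proof (lev_rem x y Hg n) as Hrem. pose proof (Rle_abs (- sumL pinc (lev x y n))) as Hab.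
  rewrite Rabs_Ropp in Hab.
  assert (Hb := bathtub_dec g mu a (a + / Q) r (allp x y n) Hr0 ltac:(lra) H1 H2
                 (allp_inC x y Hg n) (allp_pw x y Hg (conj Hx Hy) n)).
  assert (Eg : sumL (fun p => g (fst p) - g (snd p)) (allp x y n) = - sumL ginc (allp x y n)).
  { rewrite <- sumL_opp. apply sumL_ext. intros. unfold ginc. ring. }
  rewrite Eg in Hb.
  rewrite (allp_len x y Hg n) in Hb. fold r in Hb.
  assert (HQn : 0 < Q ^ n) by (apply pow_lt; lra).
  assert (E : mu * (r - r * (1 - / Q ^ n)) = (mu * r) / Q ^ n) by (field; lra).
  rewrite E in Hb.
  assert ((mu * r) / Q ^ n <= Rabs mu * r / Q ^ n).
  { unfold Rdiv. apply Rmult_le_compat_r. apply Rlt_le, Rinv_0_lt_compat; auto.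
    pose proof (Rle_abs mu) as Ha. nra. }
  assert (L * ((y - x) / Q ^ n) = L * (y - x) / Q ^ n) by (field; lra).
  assert ((Rabs mu * r + L * (y - x)) / Q ^ n = Rabs mu * r / Q ^ n + L * (y - x) / Q ^ n) by (field; lra).
  lra.
Qed.

Lemma T_L u v s1 : 0 <= v - u < 1 -> 0 <= s1 ->
  (forall s t, a <= s -> s <= t -> t <= a + / Q -> g t - g s <= s1 * (t - s)) ->
  psi v - psi u <= s1 * (v - u) / (Q - 1).
Proof.
  intros Hg Hs Hsl. pose proof Q2. pose proof Q1pos. pose proof L_nonneg.
  apply (lim_le _ _ (L * (v - u)) Q); auto.
  { nra. }
  intros n. rewrite (lev_psi u v Hg n).
  pose proof (lev_rem u v Hg n) as Hrem. pose proof (Rle_abs (sumL pinc (lev u v n))).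
  assert (Hb : sumL ginc (allp u v n) <= s1 * sumL len (allp u v n)).
  { rewrite <- sumL_scal. apply sumL_le. intros p Hp. destruct (allp_inC u v Hg n p Hp).
    unfold ginc, len. apply Hsl; lra. }
  rewrite (allp_len u v Hg n) in Hb.
  assert (HQn : 0 < Q ^ n) by (apply pow_lt; lra).
  assert (0 <= / Q ^ n) by (apply Rlt_le, Rinv_0_lt_compat; auto).
  assert (s1 * ((v - u) / (Q - 1) * (1 - / Q ^ n)) <= s1 * (v - u) / (Q - 1)).
  { assert (0 <= (v - u) / (Q - 1)) by (apply Rmult_le_pos; [lra|apply Rlt_le, Rinv_0_lt_compat; lra]).
    unfold Rdiv at 2. rewrite Rmult_assoc. apply Rmult_le_compat_l; auto. nra. }
  assert (L * ((v - u) / Q ^ n) = L * (v - u) / Q ^ n) by (field; lra).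
  lra.
Qed.

Lemma T_L' u v s2 : 0 <= v - u < 1 -> 0 <= s2 ->
  (forall s t, a <= s -> s <= t -> t <= a + / Q -> g s - g t <= s2 * (t - s)) ->
  psi u - psi v <= s2 * (v - u) / (Q - 1).
Proof.
  intros Hg Hs Hsl. pose proof Q2. pose proof Q1pos. pose proof L_nonneg.
  apply (lim_le _ _ (L * (v - u)) Q); auto.
  { nra. }
  intros n. pose proof (lev_psi u v Hg n) as Hps.
  pose proof (lev_rem u v Hg n) as Hrem. pose proof (Rle_abs (- sumL pinc (lev u v n))) as Hab.
  rewrite Rabs_Ropp in Hab.
  assert (Hb : - sumL ginc (allp u v n) <= s2 * sumL len (allp u v n)).
  { rewrite <- sumL_scal, <- sumL_opp. apply sumL_le. intros p Hp. destruct (allp_inC u v Hg n p Hp).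
    unfold ginc, len. pose proof (Hsl (fst p) (snd p)). lra. }
  rewrite (allp_len u v Hg n) in Hb.
  assert (HQn : 0 < Q ^ n) by (apply pow_lt; lra).
  assert (0 <= / Q ^ n) by (apply Rlt_le, Rinv_0_lt_compat; auto).
  assert (s2 * ((v - u) / (Q - 1) * (1 - / Q ^ n)) <= s2 * (v - u) / (Q - 1)).
  { assert (0 <= (v - u) / (Q - 1)) by (apply Rmult_le_pos; [lra|apply Rlt_le, Rinv_0_lt_compat; lra]).
    unfold Rdiv at 2. rewrite Rmult_assoc. apply Rmult_le_compat_l; auto. nra. }
  assert (L * ((v - u) / Q ^ n) = L * (v - u) / Q ^ n) by (field; lra).
  lra.
Qed.

Lemma T_ii x y mu s1 : 0 <= y - x < 1 -> 0 <= s1 ->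
  let r := (y - x) / Q in
  (forall s t, a <= s -> s <= t -> t <= a + r -> mu * (t - s) <= g t - g s) ->
  (forall s t, a + r <= s -> s <= t -> t <= a + / Q -> g t - g s <= mu * (t - s)) ->
  (forall s t, a <= s -> s <= t -> t <= a + / Q -> g t - g s <= s1 * (t - s)) ->
  psi y - psi x <= g (a + r) - g a + s1 * ((y - x) / (Q * (Q - 1))).
Proof.
  intros Hg Hs r H1 H2 Hsl. pose proof Q2. pose proof Q1pos. pose proof invQ.
  assert (Hr0 : 0 <= r) by (unfold r; apply Rmult_le_pos; [lra|apply Rlt_le, Rinv_0_lt_compat; lra]).
  assert (HrQ : r <= / Q) by (unfold r; unfold Rdiv; rewrite <- (Rmult_1_l (/ Q)) at 2;
                              apply Rmult_le_compat_r; lra).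
  rewrite (lev_psi x y Hg 1). change (allp x y 1) with ([] ++ lev x y 1). rewrite app_nil_l.
  assert (Hb := bathtub_inc g mu a (a + / Q) r (lev x y 1) Hr0 ltac:(lra) H1 H2
                 (lev_inC x y Hg 0) (lev_pw x y Hg 1)).
  fold ginc in Hb. rewrite (lev_len x y Hg 1) in Hb. rewrite pow_1 in Hb. fold r in Hb.
  replace (r - r) with 0 in Hb by ring.
  assert (Hp : sumL pinc (lev x y 1) <= sumL (fun p => s1 / (Q - 1) * len p) (lev x y 1)).
  { apply sumL_le. intros p Hp. unfold pinc, len.
    pose proof (T_L (fst p) (snd p) s1 (lev_good x y Hg 1 p Hp) Hs Hsl). unfold Rdiv in *. lra. }
  rewrite sumL_scal, (lev_len x y Hg 1), pow_1 in Hp.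
  assert (s1 / (Q - 1) * ((y - x) / Q) = s1 * ((y - x) / (Q * (Q - 1)))) by (field; lra).
  lra.
Qed.

Lemma T_ii' x y mu s2 : 0 <= y - x < 1 -> 0 <= s2 ->
  let r := (y - x) / Q in
  (forall s t, a <= s -> s <= t -> t <= a + / Q - r -> mu * (t - s) <= g t - g s) ->
  (forall s t, a + / Q - r <= s -> s <= t -> t <= a + / Q -> g t - g s <= mu * (t - s)) ->
  (forall s t, a <= s -> s <= t -> t <= a + / Q -> g s - g t <= s2 * (t - s)) ->
  psi x - psi y <= g (a + / Q - r) - g (a + / Q) + s2 * ((y - x) / (Q * (Q - 1))).
Proof.
  intros Hg Hs r H1 H2 Hsl. pose proof Q2. pose proof Q1pos. pose proof invQ.
  assert (Hr0 : 0 <= r) by (unfold r; apply Rmult_le_pos; [lra|apply Rlt_le, Rinv_0_lt_compat; lra]).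
  assert (HrQ : r <= / Q) by (unfold r; unfold Rdiv; rewrite <- (Rmult_1_l (/ Q)) at 2;
                              apply Rmult_le_compat_r; lra).
  pose proof (lev_psi x y Hg 1) as Hps. change (allp x y 1) with ([] ++ lev x y 1) in Hps. rewrite app_nil_l in Hps.
  assert (Hb := bathtub_dec g mu a (a + / Q) r (lev x y 1) Hr0 ltac:(lra) H1 H2
                 (lev_inC x y Hg 0) (lev_pw x y Hg 1)).
  rewrite (lev_len x y Hg 1) in Hb. rewrite pow_1 in Hb. fold r in Hb.
  replace (r - r) with 0 in Hb by ring.
  assert (Eg : sumL (fun p => g (fst p) - g (snd p)) (lev x y 1) = - sumL ginc (lev x y 1)).
  { rewrite <- sumL_opp. apply sumL_ext. intros. unfold ginc. ring. }
  rewrite Eg in Hb.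
  assert (Hp : - sumL pinc (lev x y 1) <= sumL (fun p => s2 / (Q - 1) * len p) (lev x y 1)).
  { rewrite <- sumL_opp. apply sumL_le. intros p Hp. unfold pinc, len.
    pose proof (T_L' (fst p) (snd p) s2 (lev_good x y Hg 1 p Hp) Hs Hsl). unfold Rdiv in *. lra. }
  rewrite sumL_scal, (lev_len x y Hg 1), pow_1 in Hp.
  assert (s2 / (Q - 1) * ((y - x) / Q) = s2 * ((y - x) / (Q * (Q - 1)))) by (field; lra).
  lra.
Qed.
End Dyn.

Theorem lemma5p4 (q : nat) (c lam : R) (psi : R -> R) (beta : R) :
  (2 <= q)%nat ->
  - / INR q - c < lam < - c ->
  pre_q_Sturmian_with q c lam psi beta ->
  let theta := lam + / INR q + c in
  let f := f0 q in
  let Q := INR q in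
  (* (i) *)
  (forall x y, lam + / Q <= x -> x < y -> y <= lam + 1 ->
     psi y - psi x <= f (/ Q - theta - (y - x) / (Q - 1)) - f (/ Q - theta) /\
     f (/ Q - theta - (y - x) / (Q - 1)) - f (/ Q - theta)
       <= f 0 - f (/ Q - theta)) /\
  (* (i)' *)
  (forall x y, lam + / Q - 1 <= y -> y < x -> x <= lam ->
     psi y - psi x <= f (theta - (x - y) / (Q - 1)) - f theta /\
     f (theta - (x - y) / (Q - 1)) - f theta <= f 0 - f theta) /\
  (* (ii) *)
  (forall x y, x < y -> y - x < 1 ->
     psi y - psi x <= f (/ Q - theta - (y - x) / Q) - f (/ Q - theta)
                      - Derive f (/ Q - theta) * ((y - x) / (Q * (Q - 1))) /\
     f (/ Q - theta - (y - x) / Q) - f (/ Q - theta)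
       - Derive f (/ Q - theta) * ((y - x) / (Q * (Q - 1)))
       <= - Derive f (/ Q - theta) * ((y - x) / (Q - 1))) /\
  (* (ii)' *)
  (forall x y, y < x -> x - y < 1 ->
     psi y - psi x <= f (theta - (x - y) / Q) - f theta
                      - Derive f theta * ((x - y) / (Q * (Q - 1))) /\
     f (theta - (x - y) / Q) - f theta - Derive f theta * ((x - y) / (Q * (Q - 1)))
       <= - Derive f theta * ((x - y) / (Q - 1))).
Proof.
  intros hq Hlam HS theta f Q0.
  subst f. subst Q0. set (Q := INR q) in *. subst theta. set (th := lam + / Q + c) in *.
  destruct HS as [_ [Hper [[L Hlip0] Heqn]]].
  set (g := fun z => f0 q (z + c)).
  assert (HQ : 2 <= Q) by (apply (Qge2 q hq)).
  assert (HiQ : 0 < / Q) by (apply Rinv_0_lt_compat; lra).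
  assert (Hlip : forall x y, Rabs (psi x - psi y) <= L * Rabs (x - y)).
  { intros x y. pose proof (Hlip0 x y I I 0%Z) as H. simpl in H. rewrite Rminus_0_r in H. auto. }
  assert (Heq : forall x, lam <= x <= lam + / Q -> g x + psi x - psi (Q * x) = beta).
  { intros x Hx. apply Heqn. exists 0%Z. simpl. rewrite Rminus_0_r. auto. }
  assert (Hth : 0 < th < / Q) by (unfold th; lra).
  assert (HgF : forall z, lam <= z <= lam + / Q -> g z = F q (z + c)).
  { intros z Hz. unfold g. apply f0_eq_F; auto. unfold inI. fold Q. unfold th in Hth. lra. }
  assert (HIz : forall z, lam <= z <= lam + / Q -> inI q (z + c)).
  { intros z Hz. unfold inI. fold Q. unfold th in Hth. lra. }
  assert (Hsl_le : forall s t p, lam <= s -> s <= t -> t <= p -> p <= lam + / Q ->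
            Fp q (p + c) * (t - s) <= g t - g s).
  { intros s t p H1 H2 H3 H4. rewrite (HgF t), (HgF s) by lra.
    replace (t - s) with ((t + c) - (s + c)) by ring.
    apply F_slope_le; auto; try lra; apply HIz; lra. }
  assert (Hsl_ge : forall s t p, lam <= p -> p <= s -> s <= t -> t <= lam + / Q ->
            g t - g s <= Fp q (p + c) * (t - s)).
  { intros s t p H1 H2 H3 H4. rewrite (HgF t), (HgF s) by lra.
    replace (t - s) with ((t + c) - (s + c)) by ring.
    apply F_slope_ge; auto; try lra; apply HIz; lra. }
  assert (HI0 : inI q 0) by (unfold inI; fold Q; lra).
  assert (Hs1 : 0 <= Fp q (lam + c)).
  { rewrite <- (Fp0 q). apply Fp_noninc; auto. apply HIz; lra. unfold th in Hth; lra. }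
  assert (Hs2 : 0 <= - Fp q (lam + / Q + c)).
  { assert (Fp q (lam + / Q + c) <= Fp q 0). apply Fp_noninc; auto.
    replace (lam + / Q + c) with ((lam + / Q) + c) by ring. apply HIz; lra. unfold th in Hth; lra.
    rewrite Fp0 in H. lra. }
  assert (Eth : lam + / Q + c = th) by (unfold th; ring).
  assert (HfF : forall z, inI q z -> f0 q z = F q z) by (intros; apply f0_eq_F; auto).
  split; [|split; [|split]].
  -
    intros x y Hx Hxy Hy. set (r := (y - x) / (Q - 1)).
    assert (Hr : 0 <= r <= / Q).
    { unfold r. split. apply Rmult_le_pos; [lra|apply Rlt_le, Rinv_0_lt_compat; lra].
      apply Rle_trans with ((1 - / Q) / (Q - 1)).
      - unfold Rdiv. apply Rmult_le_compat_r. apply Rlt_le, Rinv_0_lt_compat; lra. lra.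
      - right. field. lra. }
    assert (HT := T_i q hq lam beta L psi g Hper Heq Hlip x y (Fp q (lam + r + c)) Hx Hxy Hy).
    simpl in HT. fold r in HT.
    assert (HT2 : psi y - psi x <= g (lam + r) - g lam).
    { apply HT.
      - intros s t H1 H2 H3. fold Q in H1, H2, H3. fold r in H1, H2, H3. apply Hsl_le; lra.
      - intros s t H1 H2 H3. fold Q in H1, H2, H3. fold r in H1, H2, H3. apply Hsl_ge; lra. }
    assert (E1 : g (lam + r) = f0 q (/ Q - th - r)).
    { rewrite HgF by lra. rewrite HfF. rewrite <- F_even. f_equal. unfold th; ring.
      unfold inI; fold Q; lra. }
    assert (E2 : g lam = f0 q (/ Q - th)).
    { rewrite HgF by lra. rewrite HfF. rewrite <- F_even. f_equal. unfold th; ring.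
      unfold inI; fold Q; lra. }
    split. lra.
    rewrite !HfF; try (unfold inI; fold Q; lra).
    pose proof (F_le_F0 q hq (/ Q - th - r) ltac:(unfold inI; fold Q; lra)). lra.
  -
    intros x y Hy Hyx Hx. set (r := (x - y) / (Q - 1)).
    assert (Hr : 0 <= r <= / Q).
    { unfold r. split. apply Rmult_le_pos; [lra|apply Rlt_le, Rinv_0_lt_compat; lra].
      apply Rle_trans with ((1 - / Q) / (Q - 1)).
      - unfold Rdiv. apply Rmult_le_compat_r. apply Rlt_le, Rinv_0_lt_compat; lra. lra.
      - right. field. lra. }
    assert (P1 : lam + / Q <= y + 1) by lra. assert (P2 : y + 1 < x + 1) by lra.
    assert (P3 : x + 1 <= lam + 1) by lra.
    assert (HT := T_i' q hq lam beta L psi g Hper Heq Hlip (y + 1) (x + 1) (Fp q (lam + / Q - r + c))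
                    P1 P2 P3).
    rewrite !Hper in HT.
    assert (HT2 : psi y - psi x <= g (lam + / Q - r) - g (lam + / Q)).
    { replace r with ((x + 1 - (y + 1)) / (Q - 1)) by (unfold r; f_equal; ring).
      apply HT.
      - intros s t H1 H2 H3. fold Q in H1, H2, H3.
        replace ((x + 1 - (y + 1)) / (Q - 1)) with r in * by (unfold r; f_equal; ring).
        apply Hsl_le; lra.
      - intros s t H1 H2 H3. fold Q in H1, H2, H3.
        replace ((x + 1 - (y + 1)) / (Q - 1)) with r in * by (unfold r; f_equal; ring).
        apply Hsl_ge; lra. }
    assert (E1 : g (lam + / Q - r) = f0 q (th - r)).
    { rewrite HgF by lra. rewrite HfF. f_equal. unfold th; ring. unfold inI; fold Q; lra. }
    assert (E2 : g (lam + / Q) = f0 q th).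
    { rewrite HgF by lra. rewrite HfF. f_equal. unfold inI; fold Q; lra. }
    split. lra.
    rewrite !HfF; try (unfold inI; fold Q; lra).
    pose proof (F_le_F0 q hq (th - r) ltac:(unfold inI; fold Q; lra)). lra.
  -
    intros x y Hxy Hh. set (r := (y - x) / Q).
    assert (Hr : 0 <= r < / Q).
    { unfold r, Rdiv. split. apply Rmult_le_pos; lra.
      rewrite <- (Rmult_1_l (/ Q)) at 2. apply Rmult_lt_compat_r; lra. }
    assert (Hg : 0 <= y - x < 1) by lra.
    assert (HT2 : psi y - psi x <= g (lam + r) - g lam + Fp q (lam + c) * ((y - x) / (Q * (Q - 1)))).
    { apply (T_ii q hq lam beta L psi g Hper Heq Hlip x y (Fp q (lam + r + c)) (Fp q (lam + c)) Hg Hs1).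
      - intros s t H1 H2 H3. fold Q in H1, H2, H3. fold r in H1, H2, H3. apply Hsl_le; lra.
      - intros s t H1 H2 H3. fold Q in H1, H2, H3. fold r in H1, H2, H3. apply Hsl_ge; lra.
      - intros s t H1 H2 H3. fold Q in H1, H2, H3. apply Hsl_ge; lra. }
    assert (HIp : inI q (/ Q - th)) by (unfold inI; fold Q; lra).
    assert (HIs : inI q (/ Q - th - r)) by (unfold inI; fold Q; lra).
    assert (E1 : g (lam + r) = f0 q (/ Q - th - r)).
    { rewrite HgF by lra. rewrite HfF; auto. rewrite <- F_even. f_equal. unfold th; ring. }
    assert (E2 : g lam = f0 q (/ Q - th)).
    { rewrite HgF by lra. rewrite HfF; auto. rewrite <- F_even. f_equal. unfold th; ring. }
    assert (E3 : Fp q (lam + c) = - Derive (f0 q) (/ Q - th)).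
    { rewrite Derive_f0; auto. rewrite <- Fp_odd. f_equal. unfold th; ring. }
    rewrite E3 in HT2. fold r. split. lra.
    rewrite Derive_f0, !HfF; auto.
    pose proof (F_slope_le q hq (/ Q - th - r) (/ Q - th) (/ Q - th) HIs HIp ltac:(lra) ltac:(lra)) as Hsl.
    replace (/ Q - th - (/ Q - th - r)) with r in Hsl by ring.
    assert (Ey : (y - x) / (Q - 1) = r + (y - x) / (Q * (Q - 1))) by (unfold r; field; lra).
    rewrite Ey. lra.
  -
    intros x y Hyx Hh. set (r := (x - y) / Q).
    assert (Hr : 0 <= r < / Q).
    { unfold r, Rdiv. split. apply Rmult_le_pos; lra.
      rewrite <- (Rmult_1_l (/ Q)) at 2. apply Rmult_lt_compat_r; lra. }
    assert (Hg : 0 <= x - y < 1) by lra.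
    assert (HT2 : psi y - psi x <= g (lam + / Q - r) - g (lam + / Q)
                   + - Fp q (lam + / Q + c) * ((x - y) / (Q * (Q - 1)))).
    { apply (T_ii' q hq lam beta L psi g Hper Heq Hlip y x (Fp q (lam + / Q - r + c)) (- Fp q (lam + / Q + c)) Hg Hs2).
      - intros s t H1 H2 H3. fold Q in H1, H2, H3. fold r in H1, H2, H3. apply Hsl_le; lra.
      - intros s t H1 H2 H3. fold Q in H1, H2, H3. fold r in H1, H2, H3. apply Hsl_ge; lra.
      - intros s t H1 H2 H3. fold Q in H1, H2, H3.
        pose proof (Hsl_le s t (lam + / Q) H1 H2 H3 ltac:(lra)). lra. }
    assert (HIp : inI q th) by (unfold inI; fold Q; lra).
    assert (HIs : inI q (th - r)) by (unfold inI; fold Q; lra).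
    assert (E1 : g (lam + / Q - r) = f0 q (th - r)).
    { rewrite HgF by lra. rewrite HfF; auto. f_equal. unfold th; ring. }
    assert (E2 : g (lam + / Q) = f0 q th).
    { rewrite HgF by lra. rewrite HfF; auto. }
    assert (E3 : Fp q (lam + / Q + c) = Derive (f0 q) th).
    { rewrite Derive_f0; auto. }
    rewrite E3 in HT2. fold r. split. lra.
    rewrite Derive_f0, !HfF; auto.
    pose proof (F_slope_le q hq (th - r) th th HIs HIp ltac:(lra) ltac:(lra)) as Hsl.
    replace (th - (th - r)) with r in Hsl by ring.
    assert (Ey : (x - y) / (Q - 1) = r + (x - y) / (Q * (Q - 1))) by (unfold r; field; lra).
    rewrite Ey. lra.
Qed.
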